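(* Let $X$ be an uncountable regular open Whyburn space. Then $X$ is $\mathcal{K}$-Lindel\''{o}f if and only if $X$ is a Lusin space.
   Context: A space $X$ is open Whyburn if for every open set $A\subseteq X$ and every point $x\in\overline{A}\setminus A$ there is an open set $B\subseteq A$ with $\overline{B}\setminus A=\{x\}$. $\mathcal{K}$ denotes the collection of all families $\mathcal{U}$ of open subsets of $X$ such that $X=\bigcup\{\overline{U}:U\in\mathcal{U}\}$. $X$ is $\mathcal{K}$-Lindel\''{o}f if every $\mathcal{U}\in\mathcal{K}$ has a countable subfamily belonging to $\mathcal{K}$. A Hausdorff space $X$ is a Lusin space (in the sense of Kunen) if (a) every nowhere dense subset of $X$ is countable, (b) $X$ has at most countably many isolated points, and (c) $X$ is uncountable. *)

(* Defs.v *)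
From HB Require Import structures.
From mathcomp Require Import all_boot all_order all_algebra.
From mathcomp Require Import all_classical all_reals all_analysis.
Set Implicit Arguments. Unset Strict Implicit. Unset Printing Implicit Defensive.
Local Open Scope classical_set_scope.

Definition open_whyburn (T : topologicalType) : Prop :=
  forall A : set T, open A -> forall x : T, closure A x -> ~ A x ->
    exists B : set T, [/\ open B, B `<=` A & closure B `\` A = [set x]].

Definition in_K (T : topologicalType) (U : set (set T)) : Prop :=
  (forall u, U u -> open u) /\ \bigcup_(u in U) closure u = [set: T].

Definition K_lindelof (T : topologicalType) : Prop :=
  forall U : set (set T), in_K U ->
    exists V : set (set T), [/\ V `<=` U, countable V & in_K V].

Definition nowhere_dense (T : topologicalType) (A : set T) : Prop :=
  (closure A)° = set0.

Definition isolated_point (T : topologicalType) (x : T) : Prop :=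
  open [set x].

(* Lusin space in the sense of Kunen *)
Definition lusin_space (T : topologicalType) : Prop :=
  [/\ hausdorff_space T,
      (forall A : set T, nowhere_dense A -> countable A),
      countable [set x : T | isolated_point x]
    & ~ countable [set: T]].

Definition regular_T1 (T : topologicalType) : Prop :=
  regular_space T /\ accessible_space T.

(* Main.v *)
Require Import Defs.
From mathcomp Require Import all_boot all_order all_algebra.
From mathcomp Require Import all_classical all_reals all_analysis.
From mathcomp Require wochoice.
Local Open Scope classical_set_scope.


Section Helpers.
Context {T : topologicalType}.

Lemma clP (A : set T) x :
  closure A x <-> forall O, open O -> O x -> exists y, A y /\ O y.
Proof.
split.
- move=> cx O oO Ox; have [y [Ay Oy]] := cx O (open_nbhs_nbhs (conj oO Ox)).
  by exists y.
- move=> H B; rewrite nbhsE; move=> [V [oO Ox] OB].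
  have [y [Ay Oy]] := H V oO Ox; exists y; split => //; exact: OB.
Qed.

Lemma reg_open (hr : regular_space T) (O : set T) x : open O -> O x ->
  exists W, [/\ open W, W x & closure W `<=` O].
Proof.
move=> oO Ox.
have := hr x O (open_nbhs_nbhs (conj oO Ox)).
rewrite /= nbhs_simpl => -[V nV cVO].
exists V°; split.
- exact: open_interior.
- exact: nbhs_singleton (nbhs_interior nV).
- apply: subset_trans cVO; apply: closureS; exact: interior_subset.
Qed.

Lemma reg_T1_hausdorff : regular_T1 T -> hausdorff_space T.
Proof.
move=> [hr hT] p q cl; apply: contrapT => /eqP pq.
have [A [oA pA qA]] := hT _ _ pq.
rewrite inE in pA; rewrite inE /= in qA.
have [W [oW Wp cWA]] := reg_open hr _ _ oA pA.
have := cl W (~` closure W) (open_nbhs_nbhs (conj oW Wp)).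
have nq : nbhs q (~` closure W).
  apply: open_nbhs_nbhs; split; first exact/closed_openC/closed_closure.
  by move=> /cWA.
move=> /(_ nq) [z [Wz]]; apply; exact: subset_closure.
Qed.

End Helpers.

Lemma countable_inj T U (A : set T) (B : set U) (f : T -> U) :
  {in A &, injective f} -> (forall x, A x -> B (f x)) -> countable B ->
  countable A.
Proof.
move=> fi fAB /countable_injP [g gi]; apply/countable_injP.
exists (g \o f) => x y xA yA /= e; apply: fi => //.
by apply: gi => //; rewrite inE; apply: fAB; rewrite -inE.
Qed.

Lemma countable_sub T (A B : set T) : A `<=` B -> countable B -> countable A.
Proof. by move=> AB; apply: countable_inj (fun x y _ _ (e : x = y) => e) AB. Qed.

Lemma countable_setU T (A B : set T) : countable A -> countable B ->
  countable (A `|` B).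
Proof.
move=> cA cB.
have -> : A `|` B = \bigcup_(i in [set: bool]) (if i then A else B).
  apply/seteqP; split => x.
  - by case=> h; [exists true | exists false].
  - by case=> -[] _ h; [left | right].
by apply: bigcup_countable => // -[].
Qed.

Lemma countable_img T U (A : set T) (f : T -> U) : countable A ->
  countable (f @` A).
Proof. by move=> cA; apply: card_le_trans cA; apply: card_image_le. Qed.
Arguments countable_inj {T U A B} f.
Arguments countable_sub {T A B}.
Arguments countable_setU {T A B}.
Arguments countable_img {T U A} f.


Section B.
Context {T : topologicalType}.

Lemma in_K_cover (U : set (set T)) x : in_K U -> exists2 u, U u & closure u x.
Proof. by move=> [_ e]; have : [set: T] x by []; rewrite -e => -[u Uu cu]; exists u. Qed.

Lemma kl_closed_countable (hr : regular_space T) (hw : open_whyburn T)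
  (hK : K_lindelof T) (C : set T) : closed C -> C° = set0 -> countable C.
Proof.
move=> cC iC.
have oAop : open (~` C) by exact: closed_openC.
have clA x : C x -> closure (~` C) x.
  move=> Cx; apply/clP => O oO Ox; apply: contrapT => nE.
  have OC : O `<=` C.
    move=> y Oy; apply: contrapT => nCy; apply: nE; by exists y.
  have : C° x by rewrite (open_subsetE _ oO) in OC; exact: OC.
  by rewrite iC.
have : forall x, exists B : set T, C x ->
    [/\ open B, B `<=` ~` C & closure B `\` ~` C = [set x]].
  move=> x; have [Cx|nCx] := pselect (C x).
  - have [B [oB BA eB]] := hw _ oAop x (clA x Cx) (fun h => h Cx).
    by exists B.
  - by exists set0.
move=> /choice [B hB].
pose U := [set B x | x in C] `|` [set W | open W /\ closure W `<=` ~` C].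
have KU : in_K U.
  split.
  - move=> u [[x Cx <-]|[oW _]] //; by have [] := hB x Cx.
  - apply/seteqP; split => // y _.
    have [Cy|nCy] := pselect (C y).
    + exists (B y); first by left; exists y.
      have [_ _ e] := hB y Cy.
      have : [set y] y by [].
      by rewrite -e => -[].
    + have [W [oW Wy cW]] := reg_open hr _ _ oAop nCy.
      exists W; first by right.
      exact: subset_closure.
have [V [VU cV KV]] := hK U KU.
apply: (@countable_inj _ _ C V B _ _ cV).
- move=> x y; rewrite !inE => Cx Cy e.
  have [_ _ ex] := hB x Cx; have [_ _ ey] := hB y Cy.
  have : [set x] y by rewrite -ex e ey.
  by [].
- move=> x Cx; have [v Vv cvx] := in_K_cover _ x KV.
  case: (VU _ Vv) => [[x' Cx' ev]|[oW cW]].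
  + have [_ _ e] := hB x' Cx'.
    have : (closure (B x') `\` ~` C) x by split => //; rewrite ev.
    rewrite e => ->; by rewrite ev.
  + by have := cW _ cvx.
Qed.

End B.

Module UlamM.
Import wochoice.

Lemma ulam (T : choiceType) T' (I : set T) (N : set T')
  (kill : T' -> set T -> Prop) :
  ~ countable I -> countable N ->
  (forall x Q Q', N x -> kill x Q -> kill x Q' -> Q `&` Q' !=set0) ->
  exists Q, [/\ Q `<=` I, ~ countable Q & forall x, N x -> ~ kill x Q].
Proof.
move=> nI cN hk; apply: contrapT => nE.
have H Q : Q `<=` I -> ~ countable Q -> exists x, N x /\ kill x Q.
  move=> QI nQ; apply: contrapT => nx; apply: nE; exists Q; split => // x Nx kx.
  by apply: nx; exists x.
have [R wo] := well_ordering_principle T.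
have wc : wo_chain R (mem predT) by move=> A _; exact: wo.
have Rtot x y : R x y || R y x by apply: (wo_chainW wc).
have Ranti x y : R x y -> R y x -> x = y.
  by move=> a b; apply: (wo_chain_antisymmetric wc) => //; rewrite a b.
pose lt x y := R x y /\ x <> y.
pose P x := [set y | I y /\ lt y x].
pose J := [set x | I x /\ countable (P x)].
have JI : J `<=` I by move=> x [].
have nJ : ~ countable J.
  have [[x0 [Ix0 nx0]]|nex] := pselect (exists x, I x /\ ~ countable (P x)).
  - pose A : {pred T} := [pred x | `[< I x /\ ~ countable (P x) >]].
    have neA : nonempty A.
      by exists x0; rewrite /A inE; split.
    have [z [[zA zmin] _]] := wo A neA.
    move: zA; rewrite /A inE => -[Iz nz].
    move=> cJ; apply: nz; apply: (countable_sub _ cJ) => y [Iy [Ryz yz]].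
    split => //; apply: contrapT => ny.
    have Rzy : R z y by apply: zmin; rewrite /A inE; split.
    by apply: yz; apply: Ranti.
  - move=> cJ; apply: nI; apply: (countable_sub _ cJ) => y Iy; split => //.
    by apply: contrapT => ny; apply: nex; exists y.
have : forall a, exists f : T -> nat, countable (P a) -> {in P a &, injective f}.
  move=> a; have [ca|nca] := pselect (countable (P a)).
  - by have /countable_injP [f hf] := ca; exists f.
  - by exists (fun _ => 0%N).
move=> /choice [F hF].
pose U n b := [set a | J a /\ lt b a /\ F a b = n].
have disj n b b' a : J b -> J b' -> U n b a -> U n b' a -> b = b'.
  move=> Jb Jb' [Ja [lba e]] [_ [lba' e']].
  have [Ia ca] := Ja.
  apply: (hF a ca); rewrite ?inE //.
  - by split => //; apply: JI.
  - by split => //; apply: JI.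
  by rewrite e e'.
have Sunc b : J b -> ~ countable [set a | J a /\ lt b a].
  move=> [Ib cb] cS; apply: nJ.
  have cc := countable_setU cS (countable_setU cb (countable1 b)).
  apply: (countable_sub _ cc).
  move=> a Ja; have [->|ab] := pselect (a = b); first by right; right.
  have := Rtot a b; case/orP => r.
  - by right; left; split => //; apply: JI.
  - by left; split => //; split => // e; apply: ab.
have : forall b, exists n, J b -> ~ countable (U n b).
  move=> b; have [Jb|nJb] := pselect (J b); last by exists 0%N.
  apply: contrapT => nex; apply: (Sunc b Jb).
  have -> : [set a | J a /\ lt b a] = \bigcup_(n in [set: nat]) U n b.
    apply/seteqP; split.
    - by move=> a [Ja la]; exists (F a b) => //.
    - by move=> a [n _ [Ja [la _]]].
  apply: bigcup_countable => // n _; apply: contrapT => nc; apply: nex.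
  by exists n.
move=> /choice [nb hnb].
have : forall b, exists x, J b -> N x /\ kill x (U (nb b) b).
  move=> b; have [Jb|nJb] := pselect (J b); last first.
    have [b0 Jb0] : exists b0, J b0.
      apply: contrapT => ne; apply: nJ; suff -> : J = set0 by [].
      by apply/seteqP; split => // y Jy; apply: ne; exists y.
    have [x _] := H (U (nb b0) b0) (fun a ha => JI _ ha.1) (hnb b0 Jb0).
    by exists x.
  have [x hx] := H (U (nb b) b) (fun a ha => JI _ ha.1) (hnb b Jb).
  by exists x.
move=> /choice [xb hxb].
have /countable_injP [g hg] := cN.
pose h b := (nb b, g (xb b)).
apply: nJ; apply: (countable_inj h _ _ (@countableP _ [set: nat * nat])) => //.
move=> b b'; rewrite !inE => Jb Jb' e; apply: contrapT => ne.
case: e => e1 e2.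
have [Nx kx] := hxb b Jb; have [Nx' kx'] := hxb b' Jb'.
have exx : xb b = xb b' by apply: hg => //; rewrite inE.
rewrite -exx -e1 in kx'.
have [a [ua ua']] := hk _ _ _ Nx kx kx'.
exact: ne (disj _ _ _ a Jb Jb' ua ua'). Qed.
End UlamM.
Import UlamM.


Section C.
Context {T : topologicalType}.

Lemma kl_iso_countable (hr : regular_space T) (hw : open_whyburn T)
  (hK : K_lindelof T) : countable [set x : T | isolated_point x].
Proof.
set I := [set x : T | isolated_point x].
have subI S : S `<=` I -> open S.
  move=> SI; rewrite openE => x Sx.
  have oS1 : open [set x] := SI x Sx.
  rewrite /interior; apply: (filterS (P := [set x])); first by move=> y ->.
  exact: open_nbhs_nbhs.
have oI : open I by exact: subI.
pose N := closure I `\` I.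
have cN : countable N.
  apply: (kl_closed_countable hr hw hK).
  - rewrite /N setDE; apply: closedI; first exact: closed_closure.
    exact: open_closedC.
  - apply/seteqP; split => // z Nz.
    have oNi : open N° := open_interior N.
    have [y [Iy Ny]] := (clP _ _).1 (interior_subset Nz).1 _ oNi Nz.
    by have [_] := interior_subset Ny.
apply: contrapT => nI.
pose kill (x : T) (Q : set T) := exists O, [/\ open O, O x & O `&` I `<=` Q].
have hk x Q1 Q2 : N x -> kill x Q1 -> kill x Q2 -> Q1 `&` Q2 !=set0.
  move=> [clx _] [V [oO Ox OQ]] [V' [oO' Ox' OQ']].
  have [y [Iy [Oy O'y]]] := (clP _ _).1 clx _ (openI oO oO') (conj Ox Ox').
  by exists y; split; [apply: OQ | apply: OQ'].
have [Q [QI nQ nk]] := ulam _ _ _ _ _ nI cN hk.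
pose P := I `\` Q.
have clP' x : N x -> closure P x.
  move=> Nx; apply/clP => O oO Ox; apply: contrapT => ne.
  apply: (nk x Nx); exists O; split => // y [Oy Iy].
  apply: contrapT => nQy; apply: ne; exists y; split => //.
pose U := [set P] `|` ([set [set y] | y in Q] `|`
   [set W | open W /\ closure W `<=` ~` I]).
have KU : in_K U.
  split.
  - move=> u [->|[[y Qy <-]|[oW _]]] //.
    + by apply: subI => y [].
    + by apply: subI => z ->; apply: QI.
  - apply/seteqP; split => // z _.
    have [Iz|nIz] := pselect (I z).
    + have [Qz|nQz] := pselect (Q z).
      * exists [set z]; last exact: subset_closure.
        by right; left; exists z.
      * exists P; first by left.
        by apply: subset_closure; split.
    + have [cz|ncz] := pselect (closure I z).
      * by exists P; [left | apply: clP'; split].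
      * have ocI : open (~` closure I) by exact/closed_openC/closed_closure.
        have [W [oW Wz cW]] := reg_open hr _ _ ocI ncz.
        exists W; last exact: subset_closure.
        right; right; split => // w /cW ncw Iw; apply: ncw.
        exact: subset_closure.
have [V [VU cV KV]] := hK U KU.
apply: nQ; apply: (countable_inj (fun y => [set y]) _ _ cV).
- move=> x y _ _ e; have : [set x] x by [].
  by rewrite e.
- move=> y Qy; have [v Vv cvy] := in_K_cover _ y KV.
  have oy : open [set y] := QI y Qy.
  case: (VU _ Vv) => [ev|[[y' Qy' ev]|[oW cW]]].
  + rewrite ev in cvy.
    have [z [[Iz nQz] e]] := (clP _ _).1 cvy _ oy erefl.
    by rewrite e in nQz.
  + rewrite -ev in cvy.
    have [z [zy' zy]] := (clP _ _).1 cvy _ oy erefl.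
    by rewrite -zy zy' ev.
  + by case: (cW _ cvy (QI y Qy)).
Qed.
End C.


Section D.
Context {T : topologicalType}.

Lemma lusin_kl (hT : accessible_space T) (hL : lusin_space T) : K_lindelof T.
Proof.
case: hL => _ hnd hiso nT.
have [x0 _] : exists x0 : T, True.
  apply: contrapT => ne; apply: nT; suff -> : [set: T] = set0 by [].
  by apply/seteqP; split => // y _; apply: ne; exists y.
move=> U [oU cU].
pose D := [set G : set T | [/\ open G, G !=set0 & exists2 u, U u & G `<=` u]].
have [E [ED tE maxE]] := ex_maximal_disjoint_subcollection (fun G : set T => G) D.
have : forall G : set T, exists x, G !=set0 -> G x.
  move=> G; have [[x Gx]|nG] := pselect (G !=set0); first by exists x.
  by exists x0.
move=> /choice [p hp].
have pE G : E G -> G (p G) by move=> EG; apply: hp; have [] := ED _ EG.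
have oE G : E G -> open G by move=> EG; have [] := ED _ EG.
pose Iso := [set x : T | isolated_point x].
pose Dp := p @` E `\` Iso.
have ndDp : nowhere_dense Dp.
  apply/seteqP; split => // z iz.
  have oO : open (closure Dp)° := open_interior _.
  have [w [[[G EG <-] nIw] Ow]] := (clP _ _).1 (interior_subset iz) _ oO iz.
  apply: nIw; rewrite /Iso /isolated_point openE => _ ->.
  apply: (filterS (P := (closure Dp)° `&` G)).
    move=> v [Ov Gv]; apply: contrapT => nvw.
    have o1 : open (~` [set p G]).
      by rewrite openC; exact: accessible_closed_set1.
    have [q [[[G' EG' eq] nIq] [[Oq Gq] nq]]] :=
      (clP _ _).1 (interior_subset Ov) _ (openI (openI oO (oE _ EG)) o1)
        (conj (conj Ov Gv) nvw).
    apply: nq; rewrite -eq.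
    have -> // : G' = G.
    apply: tE => //; exists q; split => //; rewrite -eq; exact: pE.
  apply: open_nbhs_nbhs; split; first by apply: openI => //; exact: oE.
  by split => //; exact: pE.
have cE : countable E.
  apply: (countable_inj p _ _ (countable_setU (hnd _ ndDp) hiso)).
  - move=> G G'; rewrite !inE => EG EG' e.
    apply: tE => //; exists (p G); split; first exact: pE.
    by rewrite e; exact: pE.
  - move=> G EG; have [iG|niG] := pselect (Iso (p G)); first by right.
    by left; split => //; exists G.
have : forall G : set T, exists u : set T, D G -> U u /\ G `<=` u.
  move=> G; have [[_ _ [u Uu Gu]]|nG] := pselect (D G); first by exists u.
  by exists set0.
move=> /choice [u hu].
pose V1 := u @` E.
pose M := ~` \bigcup_(v in V1) closure v.
have ndM : nowhere_dense M.
  apply/seteqP; split => // z iz.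
  have oO : open (closure M)° := open_interior _.
  have [u0 Uu0 cu0] : exists2 u0, U u0 & closure u0 z.
    by have : [set: T] z by []; rewrite -cU => -[u0 ? ?]; exists u0.
  have [y [u0y Oy]] := (clP _ _).1 cu0 _ oO iz.
  pose G0 := (closure M)° `&` u0.
  have DG0 : D G0.
    split; first exact: openI (oU _ Uu0).
    - by exists y.
    - by exists u0 => // ? [].
  have [G EG [w [G0w Gw]]] : exists2 G, E G & G0 `&` G !=set0.
    apply: contrapT => nex.
    have nG0 : ~ E G0.
      by move=> EG0; apply: nex; exists G0 => //; exists y.
    apply: (maxE (E `|` [set G0])).
    - split; first by move=> ? ?; left.
      by move=> /(_ G0 (or_intror erefl)).
    - by move=> G [/ED|->].
    - move=> i j [Ei|->] [Ej|->] //= ij.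
      + exact: tE.
      + by exfalso; apply: nex; exists i => //; rewrite setIC.
      + by exfalso; apply: nex; exists j.
  have [m [Mm [_ Gm]]] := (clP _ _).1 (interior_subset G0w.1) _
      (openI oO (oE _ EG)) (conj G0w.1 Gw).
  apply: Mm; exists (u G); first by exists G.
  apply: subset_closure; apply: (hu G (ED _ EG)).2; exact: Gm.
have cM : countable M := hnd _ ndM.
have : forall x : T, exists v, U v /\ closure v x.
  by move=> x; have : [set: T] x by []; rewrite -cU => -[v ? ?]; exists v.
move=> /choice [u' hu'].
exists (u @` E `|` u' @` M); split.
- move=> v [[G EG <-]|[x _ <-]].
  + exact: (hu G (ED _ EG)).1.
  + exact: (hu' x).1.
- exact: countable_setU (countable_img _ cE) (countable_img _ cM).
- split.
  + move=> v [[G EG <-]|[x _ <-]].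
    * exact: oU (hu G (ED _ EG)).1.
    * exact: oU (hu' x).1.
  + apply/seteqP; split => // z _.
    have [Mz|nMz] := pselect (M z).
    * by exists (u' z); [right; exists z | exact: (hu' z).2].
    * move: nMz; rewrite /M => /contrapT [v [G EG <-] cv].
      by exists (u G) => //; left; exists G.
Qed.
End D.


Theorem corollary3p3 (T : topologicalType) :
  ~ countable [set: T] -> regular_T1 T -> open_whyburn T ->
  (K_lindelof T <-> lusin_space T).
Proof.
move=> nT hRT hw; have [hr hT] := hRT; split.
- move=> hK; split.
  + exact: reg_T1_hausdorff.
  + move=> A nA; apply: (countable_sub (@subset_closure _ A)).
    exact: (kl_closed_countable hr hw hK _ (@closed_closure _ A) nA).
  + exact: kl_iso_countable.
  + exact: nT.
- exact: lusin_kl.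
Qed.
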